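(* For every metric space $M$, $\dim_{\mathrm{Box}}(M)\le\dim_{\mathrm{MST}}(M)$.
   Context: A minimal spanning tree (MST) on a finite set of points in a metric space is a spanning tree of the complete graph on those points that minimizes the sum of the edge lengths; for an edge $e$, $\|e\|$ is the distance between its endpoints, and for a tree $T$ and $d\ge 0$, $E_d(T)=\sum_{e\in T}\|e\|^d$. The MST dimension is \[ \dim_{\mathrm{MST}}(M):=\inf\{d\ge 0:\ \exists C<\infty \text{ such that } E_d(T)\le C \text{ for every MST } T \text{ on any finite set of distinct points of } M\}, \] with $\inf\emptyset=\infty$. For $\epsilon>0$ let $N(\epsilon)\in\{0,1,2,\dots\}\cup\{\infty\}$ be the maximal number of pairwise disjoint open balls of radius $\epsilon$ centered at points of $M$. The upper box dimension is \[ \dim_{\mathrm{Box}}(M):=\limsup_{\epsilon\to0}\frac{\log N(\epsilon)}{\log(1/\epsilon)}. \] *)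

(* Defs.v *)
From HB Require Import structures.
From mathcomp Require Import all_boot all_order all_algebra.
From mathcomp Require Import all_classical all_reals all_analysis.
Set Implicit Arguments. Unset Strict Implicit. Unset Printing Implicit Defensive.
Import Order.TTheory GRing.Theory Num.Theory.
Local Open Scope classical_set_scope.
Local Open Scope ring_scope.

Definition is_metric (R : realType) (T : Type) (d : T -> T -> R) : Prop :=
  [/\ (forall x y, 0 <= d x y),
      (forall x y, d x y = 0 <-> x = y),
      (forall x y, d x y = d y x) &
      (forall x y z, d x z <= d x y + d y z)].

(* Graphs on the vertex set 'I_n (finite set of n distinct points p : 'I_n -> T).
   An (undirected) edge {i,j} with i < j is stored as the ordered pair (i,j). *)
Definition edge_set_ok n (E : {set 'I_n * 'I_n}) : bool :=
  [forall e in E, (e.1 < e.2)%N].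

Definition adj n (E : {set 'I_n * 'I_n}) : rel 'I_n :=
  fun i j => ((i, j) \in E) || ((j, i) \in E).

Definition g_connected n (E : {set 'I_n * 'I_n}) : Prop :=
  forall i j : 'I_n, connect (adj E) i j.

Definition g_acyclic n (E : {set 'I_n * 'I_n}) : Prop :=
  forall s : seq 'I_n, uniq s -> (3 <= size s)%N -> ~~ cycle (adj E) s.

Definition spanning_tree n (E : {set 'I_n * 'I_n}) : Prop :=
  [/\ edge_set_ok E, g_connected E & g_acyclic E].

Definition Epow (R : realType) (T : Type) (d : T -> T -> R) n (p : 'I_n -> T)
    (a : R) (E : {set 'I_n * 'I_n}) : R :=
  \sum_(e in E) powR (d (p e.1) (p e.2)) a.

Definition is_MST (R : realType) (T : Type) (d : T -> T -> R) n (p : 'I_n -> T)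
    (E : {set 'I_n * 'I_n}) : Prop :=
  spanning_tree E /\
  forall E' : {set 'I_n * 'I_n}, spanning_tree E' ->
    \sum_(e in E) d (p e.1) (p e.2) <= \sum_(e in E') d (p e.1) (p e.2).

(* dim_MST(M) = inf { a >= 0 | exists C, forall MST T on finite set of distinct
   points, E_a(T) <= C }, with inf of the empty set = +oo *)
Definition dim_MST (R : realType) (T : Type) (d : T -> T -> R) : \bar R :=
  ereal_inf [set a%:E | a in [set a : R | 0 <= a /\
    exists C : R, forall (n : nat) (p : 'I_n -> T), injective p ->
      forall E, is_MST d p E -> Epow d p a E <= C]].

Definition open_ball (R : realType) (T : Type) (d : T -> T -> R) (x : T) (r : R)
  : set T := [set z | d x z < r].

Definition Npack (R : realType) (T : Type) (d : T -> T -> R) (eps : R) : \bar R :=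
  ereal_sup [set (n%:R)%:E | n in [set n : nat | exists p : 'I_n -> T,
     injective p /\ forall i j : 'I_n, i != j ->
       open_ball d (p i) eps `&` open_ball d (p j) eps = set0]].

Definition elog (R : realType) (x : \bar R) : \bar R :=
  match x with
  | (r%:E)%E => if 0 < r then (ln r)%:E else -oo%E
  | +oo%E => +oo%E
  | -oo%E => -oo%E
  end.

(* upper box dimension: limsup_{eps -> 0+} log N(eps) / log (1/eps),
   written out as inf_{delta>0} sup_{0<eps<delta} *)
Definition dim_Box (R : realType) (T : Type) (d : T -> T -> R) : \bar R :=
  ereal_inf [set ereal_sup [set (elog (Npack d eps) * ((ln (eps^-1))^-1)%:E)%E
                             | eps in [set eps : R | 0 < eps < delta]]
            | delta in [set delta : R | 0 < delta]].

(* Main.v *)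
Require Import Defs.
From HB Require Import structures.
From mathcomp Require Import all_boot all_order all_algebra.
From mathcomp Require Import all_classical all_reals all_analysis.
Import Order.TTheory GRing.Theory Num.Theory.
Local Open Scope classical_set_scope.
Local Open Scope ring_scope.

Definition star m : {set 'I_m.+1 * 'I_m.+1} :=
  [set e | (e.1 == ord0) && (e.2 != ord0)].

Lemma star_tree m : spanning_tree (star m).
Proof.
split.
- apply/forall_inP => -[x y]; rewrite inE /= => /andP[/eqP -> hy].
  by rewrite lt0n.
- have h0 : forall i : 'I_m.+1, connect (adj (star m)) ord0 i.
    move=> i; case: (eqVneq i ord0) => [->|hi]; first exact: connect0.
    by apply: connect1; rewrite /adj !inE /= hi.
  have h1 : forall i : 'I_m.+1, connect (adj (star m)) i ord0.
    move=> i; case: (eqVneq i ord0) => [->|hi]; first exact: connect0.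
    by apply: connect1; rewrite /adj !inE /= hi orbT.
  by move=> i j; apply: connect_trans (h1 i) (h0 j).
- move=> [|x [|y [|z t]]] // hu _; move: hu => /=.
  rewrite !inE !negb_or => /and4P[/and3P[hxy hxz _] /andP[hyz hyt] _ _].
  apply/negP; rewrite /adj => /and3P[hA hB hp].
  move: hA hB; rewrite !inE /=.
  case: (eqVneq y ord0) => [hy|hy].
  + subst y => _ _.
    have hz : z != ord0 by rewrite eq_sym.
    have hx : x != ord0 by [].
    case: t hyt hp => [|u t] /=.
    * move=> _ /andP[+ _]; rewrite !inE /=.
      by rewrite (negbTE hz) (negbTE hx).
    * rewrite inE negb_or => /andP[hu _] /andP[+ _].
      have hu' : u != ord0 by rewrite eq_sym.
      by rewrite !inE /= (negbTE hz) (negbTE hu').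
  + rewrite /= ?orbF ?andbT => /eqP hx /eqP hz.
    by move: hxz; rewrite hx hz eqxx.
Qed.

Lemma tree_card n (E : {set 'I_n * 'I_n}) :
  spanning_tree E -> (1 < n)%N -> (n <= 2 * #|E|)%N.
Proof.
case=> _ hc _ n1.
pose A := ([set e.1 | e in E] :|: [set e.2 | e in E])%SET.
have hsub : ([set: 'I_n] \subset A)%SET.
  apply/fintype.subsetP => i _.
  pose j0 : 'I_n := Ordinal (ltnW n1).
  pose j1 : 'I_n := Ordinal n1.
  have hj : exists j : 'I_n, j != i.
    case: (eqVneq i j0) => [->|h]; last by exists j0; rewrite eq_sym.
    by exists j1.
  case: hj => j hji.
  move: (hc i j) => /connectP[s hs hl].
  case: s hs hl => [|u s] /=.
    by move=> _ hl; move: hji; rewrite hl eqxx.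
  move=> /andP[hu _] _; move: hu; rewrite /adj => /orP[h|h]; apply/setUP.
    by left; apply/imsetP; exists (i, u).
  by right; apply/imsetP; exists (u, i).
have := subset_leq_card hsub; rewrite cardsT card_ord => h.
apply: (leq_trans h); apply: (leq_trans (leq_card_setU _ _)).
by rewrite mul2n -addnn leq_add // leq_imset_card.
Qed.

Section Met.
Variables (R : realType) (T : Type) (d : T -> T -> R).
Hypothesis hd : is_metric d.

Lemma mst_ex m (p : 'I_m.+1 -> T) : exists E, is_MST d p E.
Proof.
pose P := fun E : {set 'I_m.+1 * 'I_m.+1} => `[< spanning_tree E >].
have P0 : P (star m) by apply/asboolP; exact: star_tree.
case: (arg_minP (fun E : {set 'I_m.+1 * 'I_m.+1} => \sum_(e in E) d (p e.1) (p e.2)) P0) => E /asboolP hE hmin.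
exists E; split => // E' hE'; apply: hmin; exact/asboolP.
Qed.

Lemma sep_dist n (p : 'I_n -> T) eps :
  (forall i j : 'I_n, i != j -> open_ball d (p i) eps `&` open_ball d (p j) eps = set0) ->
  forall i j, i != j -> eps <= d (p i) (p j).
Proof.
case: hd => hge hdeq _ _.
move=> hb i j hij; rewrite leNgt; apply/negP => hlt.
have h0 : d (p j) (p j) = 0 by apply/hdeq.
have : (open_ball d (p i) eps `&` open_ball d (p j) eps) (p j).
  split; rewrite /open_ball /= //.
  by rewrite h0; apply: le_lt_trans hlt.
by rewrite hb.
Qed.

Lemma core (a C : R) n (p : 'I_n -> T) (eps : R) : 0 <= a -> 0 < eps ->
  (forall i j : 'I_n, i != j -> open_ball d (p i) eps `&` open_ball d (p j) eps = set0) ->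
  (forall E, is_MST d p E -> Epow d p a E <= C) ->
  (n <= 1)%N \/ n%:R * powR eps a <= 2 * C.
Proof.
move=> ha he hb hC.
case: (leqP n 1) => n1; first by left.
right; case: n p hb hC n1 => [//|m] p hb hC n1.
case: (mst_ex _ p) => E hE.
have hEC := hC E hE.
have hcard := tree_card _ _ (proj1 hE) n1.
have hlow : (#|E|%:R * powR eps a <= Epow d p a E).
  rewrite /Epow mulr_natl -sumr_const; apply: ler_sum => e he'.
  have hlt : (e.1 < e.2)%N.
    by case: hE => -[/forall_inP hok _ _] _; apply: hok.
  have hne : e.1 != e.2 by rewrite neq_ltn hlt.
  case: hd => hge _ _ _.
  apply: ge0_ler_powR => //; rewrite ?nnegrE ?(ltW he) ?hge //.
  exact: (sep_dist _ _ _ hb _ _ hne).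
have h2 : (m.+1%:R : R) <= (2 * #|E|)%:R by rewrite ler_nat.
apply: (le_trans (ler_wpM2r (powR_ge0 _ _) h2)).
rewrite natrM -mulrA ler_wpM2l //.
exact: le_trans hlow hEC.
Qed.
End Met.

Theorem lemma5 (R : realType) (T : Type) (d : T -> T -> R) :
  is_metric d -> (dim_Box d <= dim_MST d)%E.
Proof.
move=> hd; rewrite /dim_MST; apply: le_ereal_inf_tmp => _ [a [ha [C hC]] <-].
apply/lee_addgt0Pr => eta heta; rewrite -EFinD.
pose K : R := Num.max 1 (2 * C).
have K1 : 1 <= K by rewrite le_max lexx.
have K0 : 0 < K by apply: lt_le_trans K1.
have C2 : 2 * C <= K by rewrite le_max lexx orbT.
pose lK := ln K.
pose delta : R := Num.min 1 (expR (- (lK / eta))).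
have dpos : 0 < delta by rewrite lt_min ltr01 expR_gt0.
apply: (@le_trans _ _ (ereal_sup [set (elog (Npack d eps) * ((ln (eps^-1))^-1)%:E)%E
                             | eps in [set eps : R | 0 < eps < delta]])).
  by apply: ereal_inf_lbound; exists delta.
apply: ge_ereal_sup => _ [eps /andP[e0 ed] <-].
have e1 : eps < 1 by move: ed; rewrite lt_min => /andP[].
have eK : eps < expR (- (lK / eta)) by move: ed; rewrite lt_min => /andP[].
have pa0 : 0 < powR eps a by apply: powR_gt0.
have pa1 : powR eps a <= 1.
  have -> : (1:R) = powR 1 a by rewrite powR1.
  by apply: ge0_ler_powR => //; rewrite ?nnegrE ?ler01 ?(ltW e0) ?(ltW e1).
have hN : (Npack d eps <= (K / powR eps a)%:E)%E.
  apply: ge_ereal_sup => _ [n [p [hinj hb]] <-]; rewrite lee_fin.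
  rewrite ler_pdivlMr //.
  case: (@core R T d hd a C n p eps ha e0 hb (fun E => hC n p hinj E)) => [n1|hn].
    apply: (le_trans _ K1); apply: (le_trans (ler_wpM2l _ pa1)) => //.
    by rewrite mulr1 lern1.
  exact: le_trans hn C2.
have L0 : 0 < ln (eps^-1) by apply: ln_gt0; rewrite invf_gt1.
have Li0 : (0 < ((ln (eps^-1))^-1)%:E)%E by rewrite lte_fin invr_gt0.
move: hN; case: (Npack d eps) => [r| |] hN /=; last first.
- by rewrite gt0_mulNye // leNye.
- by rewrite leye_eq in hN.
case: ifP => r0; last by rewrite gt0_mulNye // leNye.
rewrite -EFinM lee_fin ler_pdivrMr // mulrDl.
have hL : ln (eps^-1) = - ln eps by rewrite lnV.
have hr : ln r <= lK + a * ln (eps^-1).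
  rewrite lee_fin in hN.
  apply: (le_trans (_ : ln r <= ln (K / powR eps a))).
    by rewrite ler_ln // posrE divr_gt0.
  by rewrite ln_div ?posrE // ln_powR hL mulrN.
have hk : lK <= eta * ln (eps^-1).
  have : ln eps < - (lK / eta).
    by rewrite -[X in _ < X]expRK ltr_ln ?posrE ?expR_gt0.
  rewrite ltrNr -hL ltr_pdivrMr // mulrC => h; exact: ltW.
apply: (le_trans hr); rewrite addrC lerD2l mulrC.
by rewrite mulrC.
Qed.
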